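(* In any monoid admitting a $C(2)$ presentation, the set of non-identity indecomposable elements is a generating set for the monoid, and it is contained in every generating set for the monoid.
   Context: A monoid presentation $\langle \mathscr{A} \mid \mathscr{R} \rangle$ consists of an alphabet $\mathscr{A}$ and a set $\mathscr{R} \subseteq \mathscr{A}^* \times \mathscr{A}^*$ of relations; the monoid presented is the quotient of the free monoid $\mathscr{A}^*$ by the smallest congruence containing $\mathscr{R}$. A relation word is a word occurring as one side of a relation. A piece is a word which occurs as a factor of two distinct relation words, or in two different (possibly overlapping) positions within one relation word; the empty word is always a piece. The presentation is $C(2)$ if no relation word can be written as a product of strictly fewer than $2$ pieces (i.e. no relation word is empty or is itself a piece). A non-identity element $s$ of a monoid is indecomposable if whenever $xy = s$ we have $x = 1$ or $y = 1$. *)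

(* Defs.v *)
From mathcomp Require Import all_boot.
Set Implicit Arguments. Unset Strict Implicit. Unset Printing Implicit Defensive.

Fixpoint all_prop (T : Type) (P : T -> Prop) (l : seq T) : Prop :=
  if l is x :: l' then P x /\ all_prop P l' else True.
 

Section Presentations.
Variable A : Type.
Variable R : seq A * seq A -> Prop.

(* The smallest congruence on A^* containing R: equivalence closure of
   one-step rewriting  u l v  <->  u r v  for (l, r) in R. *)
Inductive pres_cong : seq A -> seq A -> Prop :=
| pc_step (u v l r : seq A) : R (l, r) -> pres_cong (u ++ l ++ v) (u ++ r ++ v)
| pc_refl (w : seq A) : pres_cong w w
| pc_sym (w1 w2 : seq A) : pres_cong w1 w2 -> pres_cong w2 w1
| pc_trans (w1 w2 w3 : seq A) : pres_cong w1 w2 -> pres_cong w2 w3 -> pres_cong w1 w3.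

Definition relation_word (w : seq A) : Prop :=
  exists w', R (w, w') \/ R (w', w).

Definition occurs_at (p r : seq A) (i : nat) : Prop :=
  exists u v, r = u ++ p ++ v /\ size u = i.

Definition piece (p : seq A) : Prop :=
  p = [::] \/
  exists r1 r2 i j, relation_word r1 /\ relation_word r2 /\
    occurs_at p r1 i /\ occurs_at p r2 j /\ (r1 <> r2 \/ i <> j).

Definition small_cancellation (n : nat) : Prop :=
  forall (w : seq A) (ps : seq (seq A)),
    relation_word w -> all_prop piece ps -> flatten ps = w -> n <= size ps.
End Presentations.

Definition is_monoid (M : Type) (mul : M -> M -> M) (one : M) : Prop :=
  (forall x y z, mul x (mul y z) = mul (mul x y) z) /\
  (forall x, mul one x = x) /\ (forall x, mul x one = x).

Definition presents (A M : Type) (mul : M -> M -> M) (one : M)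
  (R : seq A * seq A -> Prop) : Prop :=
  exists phi : seq A -> M,
    phi [::] = one /\
    (forall u v, phi (u ++ v) = mul (phi u) (phi v)) /\
    (forall m, exists w, phi w = m) /\
    (forall u v, phi u = phi v <-> pres_cong R u v).

Definition generates (M : Type) (mul : M -> M -> M) (one : M) (S : M -> Prop) : Prop :=
  forall m, exists l : seq M, all_prop S l /\ foldr mul one l = m.

Definition indecomposable (M : Type) (mul : M -> M -> M) (one : M) (s : M) : Prop :=
  s <> one /\ forall x y, mul x y = s -> x = one \/ y = one.

(* Main.v *)
Require Import Defs.
From mathcomp Require Import all_boot.
From Stdlib Require Import Classical.
From mathcomp Require Import zify.
Set Implicit Arguments.

Lemma rw_nonempty (A : Type) (R : seq A * seq A -> Prop) w :
  small_cancellation R 2 -> relation_word R w -> w <> [::].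
Proof. move=> HC Hw E; have := HC w [::] Hw I; rewrite E => /(_ erefl) //. Qed.

Lemma rw_not_piece (A : Type) (R : seq A * seq A -> Prop) w :
  small_cancellation R 2 -> relation_word R w -> ~ piece R w.
Proof.
move=> HC Hw Hp; have := HC w [:: w] Hw (conj Hp I).
by rewrite /= cats0 => /(_ erefl).
Qed.

Definition T (A : Type) (R : seq A * seq A -> Prop) (w : seq A) :=
  (exists x, w = [:: x]) \/ relation_word R w.
Arguments T {A}.

Lemma T_step (A : Type) (R : seq A * seq A -> Prop) u l v :
  small_cancellation R 2 -> relation_word R l ->
  T R (u ++ l ++ v) -> u = [::] /\ v = [::].
Proof.
move=> HC Hl [[x Hx]|Hw].
- have Hs := congr1 size Hx; rewrite !size_cat /= in Hs.
  have : size l <> 0 by move/size0nil; exact: rw_nonempty HC Hl.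
  case: u Hx Hs => [|? ?] //; case: v => [|? ?] //=; rewrite ?addn0 => _; lia.
- case: (classic (u ++ l ++ v = l)) => E.
  + have Hs := congr1 size E; rewrite !size_cat in Hs.
    split; apply/size0nil; lia.
  + exfalso; apply: (rw_not_piece HC Hl); right.
    exists (u ++ l ++ v), l, (size u), 0; split; [done|split; [done|split; [|split]]].
    * by exists u, v.
    * by exists [::], [::]; rewrite cats0.
    * by left.
Qed.

Lemma T_cong (A : Type) (R : seq A * seq A -> Prop) w1 w2 :
  small_cancellation R 2 -> pres_cong R w1 w2 -> (T R w1 <-> T R w2).
Proof.
move=> HC; elim => {w1 w2}.
- move=> u v l r Hr.
  have Hl : relation_word R l by exists r; left.
  have Hr' : relation_word R r by exists l; right.
  split=> H.
  + by case: (T_step _ _ HC Hl H) => -> ->; right; rewrite /= cats0.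
  + by case: (T_step _ _ HC Hr' H) => -> ->; right; rewrite /= cats0.
- by [].
- by move=> ? ? ? [].
- by move=> ? ? ? ? [? ?] ? [? ?]; split; auto.
Qed.

Lemma single_cong (A : Type) (R : seq A * seq A -> Prop) x w1 w2 :
  small_cancellation R 2 -> ~ relation_word R [:: x] ->
  pres_cong R w1 w2 -> (w1 = [:: x] <-> w2 = [:: x]).
Proof.
move=> HC Hx; elim => {w1 w2}.
- move=> u v l r Hr.
  have Hl : relation_word R l by exists r; left.
  have Hr' : relation_word R r by exists l; right.
  have key : forall l', relation_word R l' -> u ++ l' ++ v = [:: x] -> False.
    move=> l' Hl' E.
    have Hs := congr1 size E; rewrite !size_cat /= in Hs.
    have : size l' <> 0 by move/size0nil; exact: rw_nonempty HC Hl'.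
    case: u E Hs => [|? ?] //; case: v => [|? ?] //=; rewrite ?cats0;
      try (move=> *; lia).
    by move=> E _ _; apply: Hx; rewrite -E.
  by split=> E; exfalso; [apply: (key l) | apply: (key r)].
- by [].
- by move=> ? ? ? [].
- by move=> ? ? ? ? [? ?] ? [? ?]; split; auto.
Qed.

Lemma foldr_cat_mul (M : Type) (mul : M -> M -> M) (one : M) :
  is_monoid mul one -> forall l1 l2,
  foldr mul one (l1 ++ l2) = mul (foldr mul one l1) (foldr mul one l2).
Proof.
move=> [Ha [H1 _]]; elim => [|x l IH] l2 /=; first by rewrite H1.
by rewrite IH Ha.
Qed.

Lemma all_prop_cat (T : Type) (P : T -> Prop) l1 l2 :
  all_prop P l1 -> all_prop P l2 -> all_prop P (l1 ++ l2).
Proof. by elim: l1 => [|x l IH] //= [? ?] ?; split; auto. Qed.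

Unset Implicit Arguments.

Theorem corollary1 (M : Type) (mul : M -> M -> M) (one : M)
  (HM : is_monoid mul one)
  (A : Type) (R : seq A * seq A -> Prop)
  (Hpres : presents mul one R) (HC2 : small_cancellation R 2) :
  generates mul one (indecomposable mul one) /\
  (forall S : M -> Prop, generates mul one S ->
     forall s, indecomposable mul one s -> S s).
Proof.
split; last first.
  move=> S HS s [Hs1 Hs] ; case: (HS s) => l [Hl Hl2] {HS}; rewrite -Hl2 in Hs1 Hs *; clear Hl2.
  elim: l Hl Hs1 Hs => [|x l IH] /=; first by move=> _ H; case: (H erefl).
  move=> [Hx Hl] Hs1 Hs.
  case: (Hs x (foldr mul one l) erefl) => E.
  - rewrite E in Hs1 Hs; case: HM => [_ [H1 _]]; rewrite H1 in Hs1 Hs.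
    by rewrite E H1; apply: IH.
  - by rewrite E; case: HM => [_ [_ H2]]; rewrite H2.
case: Hpres => phi [Hnil [Hmul [Hsurj Hker]]].
have Hcons : forall a w, phi (a :: w) = mul (phi [:: a]) (phi w).
  by move=> a w; rewrite -Hmul.
have Hin : forall r s1 x s2, relation_word R r -> 2 <= size r ->
    r = s1 ++ x :: s2 -> indecomposable mul one (phi [:: x]).
  move=> r s1 x s2 Hr Hsz E.
  have Hnx : ~ relation_word R [:: x].
    move=> Hx; apply: (rw_not_piece HC2 Hx); right.
    exists r, [:: x], (size s1), 0; split; [done|split; [done|split; [|split]]].
    - by exists s1, s2.
    - by exists [::], [::].
    - by left => Er; rewrite Er in Hsz.
  have Hc := fun w => single_cong (x:=x) (w2:=w) HC2 Hnx.
  split.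
  - move=> E1; rewrite -Hnil in E1; move/Hker: E1 => /Hc [/(_ erefl)] //.
  - move=> p q E1.
    case: (Hsurj p) => u Hu; case: (Hsurj q) => v Hv.
    have : phi [:: x] = phi (u ++ v) by rewrite Hmul Hu Hv.
    move/Hker => /Hc [/(_ erefl)] Euv _.
    case: u Hu Euv => [|? u] Hu; first by left; rewrite -Hu.
    case: v Hv => [|? v] Hv; first by right; rewrite -Hv.
    by case: u {Hu} => [|? ?] //=.
have Hrw : forall r, relation_word R r -> 2 <= size r ->
    exists l, all_prop (indecomposable mul one) l /\ foldr mul one l = phi r.
  move=> r Hr Hsz.
  suff : forall s2 s1, r = s1 ++ s2 ->
    exists l, all_prop (indecomposable mul one) l /\ foldr mul one l = phi s2.
    by move/(_ r [::] erefl).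
  elim => [|x s2 IH] s1 E; first by exists [::].
  case: (IH (rcons s1 x)); first by rewrite E cat_rcons.
  move=> l [Hl Hf]; exists (phi [:: x] :: l); split.
  - by split => //; apply: (Hin r s1 x s2).
  - by rewrite /= Hf -Hcons.
have Hlet : forall a,
    exists l, all_prop (indecomposable mul one) l /\ foldr mul one l = phi [:: a].
  move=> a.
  case: (classic (indecomposable mul one (phi [:: a]))) => Hi.
    by exists [:: phi [:: a]]; split => //=; case: HM => [_ [_ ->]].
  case: (classic (phi [:: a] = one)) => H1; first by exists [::].
  have [p [q [Epq [Hp Hq]]]] : exists p q, mul p q = phi [:: a] /\ p <> one /\ q <> one.
    apply: NNPP => Hn; apply: Hi; split => // p q E.
    apply: NNPP => Hn2; apply: Hn; exists p, q; split => //.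
    by split => Hc; apply: Hn2; [left|right].
  case: (Hsurj p) => u Hu; case: (Hsurj q) => v Hv.
  have : phi (u ++ v) = phi [:: a] by rewrite Hmul Hu Hv.
  move/Hker/(T_cong HC2) => [_ /(_ (or_introl (ex_intro _ a erefl)))] [[y Ey]|Hr].
  - case: u Hu Ey => [|? u] Hu; first by exfalso; apply: Hp; rewrite -Hu.
    case: v Hv => [|? v] Hv; first by exfalso; apply: Hq; rewrite -Hv.
    by case: u {Hu} => [|? ?].
  - have Hsz : 2 <= size (u ++ v).
      case: u Hu {Hr} => [|? u] Hu; first by exfalso; apply: Hp; rewrite -Hu.
      case: v Hv => [|? v] Hv; first by exfalso; apply: Hq; rewrite -Hv.
      by rewrite size_cat /= addnS.
    case: (Hrw _ Hr Hsz) => l [Hl Hf]; exists l; split => //.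
    by rewrite Hf Hmul Hu Hv.
move=> m; case: (Hsurj m) => w <-.
elim: w => [|a w [l [Hl Hf]]]; first by exists [::].
case: (Hlet a) => la [Hla Hfa]; exists (la ++ l); split.
- exact: (all_prop_cat _ _ _ Hla Hl).
- by rewrite (foldr_cat_mul HM) Hfa Hf -Hmul.
Qed.
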